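(* Let $L\dashv R\colon \mathcal{X}\to\mathcal{A}$ be a geometric morphism. Then the category ${}_L\mathbf{StrCsp}$ is a topos.
   Context: A geometric morphism $L\dashv R\colon\mathcal{X}\to\mathcal{A}$ here means an adjunction between topoi $\mathcal{X}$ and $\mathcal{A}$ with left adjoint $L\colon\mathcal{A}\to\mathcal{X}$, right adjoint $R\colon\mathcal{X}\to\mathcal{A}$, and $L$ left exact (preserves finite limits). An $L$-structured cospan is a diagram $La\to x\leftarrow Lb$ in $\mathcal{X}$ with $a,b$ objects of $\mathcal{A}$. The category ${}_L\mathbf{StrCsp}$ has $L$-structured cospans as objects; an arrow from $La\to x\leftarrow Lb$ to $Lc\to y\leftarrow Ld$ is a triple $(f,g,h)$ with $f\colon a\to c$, $h\colon b\to d$ in $\mathcal{A}$ and $g\colon x\to y$ in $\mathcal{X}$ such that the two squares formed with $Lf$, $g$, $Lh$ commute. *)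

(* Defs.v *)
From Stdlib Require Import ProofIrrelevance.

Set Implicit Arguments.

Record Category := {
  Ob :> Type;
  Hom : Ob -> Ob -> Type;
  idm : forall a, Hom a a;
  comp : forall x y z, Hom y z -> Hom x y -> Hom x z;
  comp_id_l : forall a b (f : Hom a b), comp (idm b) f = f;
  comp_id_r : forall a b (f : Hom a b), comp f (idm a) = f;
  comp_assoc : forall a b c d (f : Hom c d) (g : Hom b c) (h : Hom a b),
      comp f (comp g h) = comp (comp f g) h
}.
Arguments Hom {C} _ _ : rename.
Arguments idm {C} a : rename.
Arguments comp {C x y z} _ _ : rename.

Record Functor (C D : Category) := {
  fobj :> C -> D;
  fmap : forall a b, Hom a b -> Hom (fobj a) (fobj b);
  fmap_id : forall a, fmap a a (idm a) = idm (fobj a);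
  fmap_comp : forall a b c (f : Hom b c) (g : Hom a b),
      fmap a c (comp f g) = comp (fmap b c f) (fmap a b g)
}.
Arguments fmap {C D} f0 {a b} _.

Section Limits.
Variable C : Category.

Definition is_terminal (t : C) : Prop :=
  forall x : C, exists f : Hom x t, forall g : Hom x t, g = f.

Definition is_pullback {a b c : C} (f : Hom a c) (g : Hom b c)
    (p : C) (p1 : Hom p a) (p2 : Hom p b) : Prop :=
  comp f p1 = comp g p2 /\
  forall (q : C) (q1 : Hom q a) (q2 : Hom q b), comp f q1 = comp g q2 ->
    exists u : Hom q p, comp p1 u = q1 /\ comp p2 u = q2 /\
      forall v : Hom q p, comp p1 v = q1 -> comp p2 v = q2 -> v = u.

Definition is_product {a b p : C} (p1 : Hom p a) (p2 : Hom p b) : Prop :=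
  forall (q : C) (q1 : Hom q a) (q2 : Hom q b),
    exists u : Hom q p, comp p1 u = q1 /\ comp p2 u = q2 /\
      forall v : Hom q p, comp p1 v = q1 -> comp p2 v = q2 -> v = u.

Definition has_finite_limits : Prop :=
  (exists t : C, is_terminal t) /\
  (forall (a b c : C) (f : Hom a c) (g : Hom b c),
     exists (p : C) (p1 : Hom p a) (p2 : Hom p b), is_pullback f g p p1 p2).

(** [e] (with product [p = e × a] and evaluation [ev]) is an exponential [b^a]. *)
Definition is_exponential {a b e p : C} (p1 : Hom p e) (p2 : Hom p a)
    (ev : Hom p b) : Prop :=
  is_product p1 p2 /\
  forall (x q : C) (q1 : Hom q x) (q2 : Hom q a), is_product q1 q2 ->
  forall f : Hom q b,
    let P := fun g : Hom x e =>
      forall m : Hom q p, comp p1 m = comp g q1 -> comp p2 m = q2 ->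
        comp ev m = f in
    exists g : Hom x e, P g /\ forall g' : Hom x e, P g' -> g' = g.

Definition cartesian_closed : Prop :=
  (forall a b : C, exists (p : C) (p1 : Hom p a) (p2 : Hom p b), is_product p1 p2) /\
  (forall a b : C, exists (e p : C) (p1 : Hom p e) (p2 : Hom p a) (ev : Hom p b),
      is_exponential p1 p2 ev).

Definition mono {u x : C} (m : Hom u x) : Prop :=
  forall (z : C) (f g : Hom z u), comp m f = comp m g -> f = g.

Definition has_subobject_classifier : Prop :=
  exists (t Omega : C) (tru : Hom t Omega), is_terminal t /\
    forall (u x : C) (m : Hom u x), mono m ->
      let P := fun chi : Hom x Omega =>
        forall k : Hom u t, is_pullback chi tru u m k in
      exists chi : Hom x Omega, P chi /\ forall chi', P chi' -> chi' = chi.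

Definition is_topos : Prop :=
  has_finite_limits /\ cartesian_closed /\ has_subobject_classifier.

End Limits.
Arguments is_terminal {C} t.
Arguments is_pullback {C a b c} f g p p1 p2.
Arguments is_product {C a b p} p1 p2.
Arguments is_exponential {C a b e p} p1 p2 ev.
Arguments mono {C u x} m.

Definition is_adjunction {A X : Category} (L : Functor A X) (R : Functor X A) : Prop :=
  exists (eta : forall a : A, Hom a (R (L a))) (eps : forall x : X, Hom (L (R x)) x),
    (forall (a a' : A) (f : Hom a a'), comp (eta a') f = comp (fmap R (fmap L f)) (eta a)) /\
    (forall (x x' : X) (g : Hom x x'), comp g (eps x) = comp (eps x') (fmap L (fmap R g))) /\
    (forall a : A, comp (eps (L a)) (fmap L (eta a)) = idm (L a)) /\
    (forall x : X, comp (fmap R (eps x)) (eta (R x)) = idm (R x)).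

Definition left_exact {A X : Category} (L : Functor A X) : Prop :=
  (forall t : A, is_terminal t -> is_terminal (L t)) /\
  (forall (a b c p : A) (f : Hom a c) (g : Hom b c) (p1 : Hom p a) (p2 : Hom p b),
     is_pullback f g p p1 p2 ->
     is_pullback (fmap L f) (fmap L g) (L p) (fmap L p1) (fmap L p2)).

Definition geometric_morphism {A X : Category} (L : Functor A X) (R : Functor X A) : Prop :=
  is_topos A /\ is_topos X /\ is_adjunction L R /\ left_exact L.

Section StrCsp.
Variables (A X : Category) (L : Functor A X).

Record SCObj := {
  sc_a : A; sc_b : A; sc_x : X;
  sc_l : Hom (L sc_a) sc_x;
  sc_r : Hom (L sc_b) sc_x
}.

Record SCHom (c d : SCObj) := {
  sc_f : Hom (sc_a c) (sc_a d);
  sc_g : Hom (sc_x c) (sc_x d);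
  sc_h : Hom (sc_b c) (sc_b d);
  sc_sql : comp sc_g (sc_l c) = comp (sc_l d) (fmap L sc_f);
  sc_sqr : comp sc_g (sc_r c) = comp (sc_r d) (fmap L sc_h)
}.

Lemma SCHom_eq (c d : SCObj) (u v : SCHom c d) :
  sc_f u = sc_f v -> sc_g u = sc_g v -> sc_h u = sc_h v -> u = v.
Proof.
  destruct u as [f g h l r], v as [f' g' h' l' r']; simpl; intros -> -> ->.
  f_equal; apply proof_irrelevance.
Qed.

Program Definition SC_id (c : SCObj) : SCHom c c :=
  {| sc_f := idm _; sc_g := idm _; sc_h := idm _ |}.
Next Obligation. intros c; rewrite fmap_id, comp_id_l, comp_id_r; reflexivity. Qed.
Next Obligation. intros c; rewrite fmap_id, comp_id_l, comp_id_r; reflexivity. Qed.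

Program Definition SC_comp (c d e : SCObj) (u : SCHom d e) (v : SCHom c d) : SCHom c e :=
  {| sc_f := comp (sc_f u) (sc_f v); sc_g := comp (sc_g u) (sc_g v);
     sc_h := comp (sc_h u) (sc_h v) |}.
Next Obligation.
  intros c d e u v; simpl.
  rewrite <- comp_assoc, sc_sql, comp_assoc, sc_sql, <- comp_assoc, fmap_comp; reflexivity.
Qed.
Next Obligation.
  intros c d e u v; simpl.
  rewrite <- comp_assoc, sc_sqr, comp_assoc, sc_sqr, <- comp_assoc, fmap_comp; reflexivity.
Qed.

Program Definition StrCsp : Category :=
  {| Ob := SCObj; Hom := SCHom; idm := SC_id; comp := SC_comp |}.
Next Obligation. intros; apply SCHom_eq; simpl; apply comp_id_l. Qed.
Next Obligation. intros; apply SCHom_eq; simpl; apply comp_id_r. Qed.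
Next Obligation. intros; apply SCHom_eq; simpl; apply comp_assoc. Qed.

End StrCsp.

(* Main.v *)
Require Import Defs.
From Stdlib Require Import ProofIrrelevance IndefiniteDescription Setoid.


Infix "∘" := comp (at level 40, left associativity).

Ltac simplC := repeat (rewrite ?comp_id_l, ?comp_id_r, ?fmap_id, ?fmap_comp; rewrite <- ?comp_assoc).

Section Gen.
Context {C : Category}.

Lemma cl {b c d : C} {f : Hom c d} {g : Hom b c} {h : Hom b d} (H : f ∘ g = h) {e : C} (k : Hom e b) :
  f ∘ (g ∘ k) = h ∘ k.
Proof. rewrite comp_assoc, H; reflexivity. Qed.

Definition pr_pair {a b p : C} {p1 : Hom p a} {p2 : Hom p b} (H : is_product p1 p2) {q : C}
  (q1 : Hom q a) (q2 : Hom q b) : Hom q p :=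
  proj1_sig (constructive_indefinite_description _ (H q q1 q2)).

Section PR.
Context {a b p : C} {p1 : Hom p a} {p2 : Hom p b} (H : is_product p1 p2).
Lemma pr_pair1 {q} (q1 : Hom q a) q2 : p1 ∘ pr_pair H q1 q2 = q1.
Proof. unfold pr_pair; destruct (constructive_indefinite_description _ _) as [u [H1 [H2 H3]]]; auto. Qed.
Lemma pr_pair2 {q} (q1 : Hom q a) q2 : p2 ∘ pr_pair H q1 q2 = q2.
Proof. unfold pr_pair; destruct (constructive_indefinite_description _ _) as [u [H1 [H2 H3]]]; auto. Qed.
Lemma pr_uniq {q} (q1 : Hom q a) q2 v : p1 ∘ v = q1 -> p2 ∘ v = q2 -> v = pr_pair H q1 q2.
Proof. unfold pr_pair; destruct (constructive_indefinite_description _ _) as [u [H1 [H2 H3]]]; auto. Qed.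
Lemma pr_ext {q} (u v : Hom q p) : p1 ∘ u = p1 ∘ v -> p2 ∘ u = p2 ∘ v -> u = v.
Proof. intros E1 E2. rewrite (pr_uniq (p1 ∘ v) (p2 ∘ v) u); auto. symmetry; apply pr_uniq; auto. Qed.
Lemma pr_pair_comp {q r} (q1 : Hom q a) q2 (k : Hom r q) : pr_pair H q1 q2 ∘ k = pr_pair H (q1 ∘ k) (q2 ∘ k).
Proof. apply pr_uniq; rewrite comp_assoc; [rewrite pr_pair1|rewrite pr_pair2]; auto. Qed.
End PR.

Definition pb_pair {a b c p : C} {f : Hom a c} {g : Hom b c} {p1 : Hom p a} {p2 : Hom p b}
  (H : is_pullback f g p p1 p2) {q : C} (q1 : Hom q a) (q2 : Hom q b) (E : f ∘ q1 = g ∘ q2) : Hom q p :=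
  proj1_sig (constructive_indefinite_description _ (proj2 H q q1 q2 E)).

Section PB.
Context {a b c p : C} {f : Hom a c} {g : Hom b c} {p1 : Hom p a} {p2 : Hom p b}
  (H : is_pullback f g p p1 p2).
Lemma pb_pair1 {q} (q1 : Hom q a) q2 E : p1 ∘ pb_pair H q1 q2 E = q1.
Proof. unfold pb_pair; destruct (constructive_indefinite_description _ _) as [u [H1 [H2 H3]]]; auto. Qed.
Lemma pb_pair2 {q} (q1 : Hom q a) q2 E : p2 ∘ pb_pair H q1 q2 E = q2.
Proof. unfold pb_pair; destruct (constructive_indefinite_description _ _) as [u [H1 [H2 H3]]]; auto. Qed.
Lemma pb_uniq {q} (q1 : Hom q a) q2 E v : p1 ∘ v = q1 -> p2 ∘ v = q2 -> v = pb_pair H q1 q2 E.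
Proof. unfold pb_pair; destruct (constructive_indefinite_description _ _) as [u [H1 [H2 H3]]]; auto. Qed.
Lemma pb_comm : f ∘ p1 = g ∘ p2.
Proof. exact (proj1 H). Qed.
Lemma pb_ext {q} (u v : Hom q p) : p1 ∘ u = p1 ∘ v -> p2 ∘ u = p2 ∘ v -> u = v.
Proof.
  intros E1 E2.
  assert (E : f ∘ (p1 ∘ v) = g ∘ (p2 ∘ v)) by (rewrite !comp_assoc, pb_comm; reflexivity).
  rewrite (pb_uniq _ _ E u); auto. symmetry; apply pb_uniq; auto.
Qed.
End PB.

Definition bang {t : C} (Ht : is_terminal t) (x : C) : Hom x t :=
  proj1_sig (constructive_indefinite_description _ (Ht x)).
Lemma term_uniq {t : C} (Ht : is_terminal t) {x} (f g : Hom x t) : f = g.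
Proof. destruct (Ht x) as [h Hh]; rewrite (Hh f), (Hh g); reflexivity. Qed.

Lemma mono_from_term {t : C} (Ht : is_terminal t) {y} (m : Hom t y) : mono m.
Proof. intros z f g _; apply (term_uniq Ht). Qed.

Section EXP.
Context {a b e p : C} {p1 : Hom p e} {p2 : Hom p a} {ev : Hom p b} (H : is_exponential p1 p2 ev).

Definition curry {x q : C} {q1 : Hom q x} {q2 : Hom q a} (Hq : is_product q1 q2) (f : Hom q b) : Hom x e :=
  proj1_sig (constructive_indefinite_description _ (proj2 H x q q1 q2 Hq f)).

Context {x q : C} {q1 : Hom q x} {q2 : Hom q a} (Hq : is_product q1 q2).
Definition exm (g : Hom x e) : Hom q p := pr_pair (proj1 H) (g ∘ q1) q2.

Lemma curry_ev (f : Hom q b) : ev ∘ exm (curry Hq f) = f.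
Proof.
  unfold curry, exm; destruct (constructive_indefinite_description _ _) as [g [Pg U]]; simpl.
  apply Pg; [apply pr_pair1|apply pr_pair2].
Qed.
Lemma curry_uniq (f : Hom q b) g : ev ∘ exm g = f -> g = curry Hq f.
Proof.
  intro E. unfold curry, exm in *; destruct (constructive_indefinite_description _ _) as [g0 [Pg U]]; simpl.
  apply U. intros m E1 E2. rewrite <- E. f_equal. apply pr_uniq; auto.
Qed.
End EXP.

Lemma exp_intro {a b e p : C} (p1 : Hom p e) (p2 : Hom p a) (ev : Hom p b) :
  is_product p1 p2 ->
  (forall x, exists q (q1 : Hom q x) (q2 : Hom q a), is_product q1 q2 /\
     forall f : Hom q b, exists g : Hom x e,
       (forall m, p1 ∘ m = g ∘ q1 -> p2 ∘ m = q2 -> ev ∘ m = f) /\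
       (forall g' m, p1 ∘ m = g' ∘ q1 -> p2 ∘ m = q2 -> ev ∘ m = f -> g' = g)) ->
  is_exponential p1 p2 ev.
Proof.
  intros Hp Hx. split; [exact Hp|].
  intros x q' q1' q2' Hq' f'.
  destruct (Hx x) as [q [q1 [q2 [Hq Hf]]]].
  set (phi := pr_pair Hq' q1 q2). set (psi := pr_pair Hq q1' q2').
  assert (E1 : phi ∘ psi = idm _).
  { apply (pr_ext Hq'); rewrite comp_assoc, comp_id_r; unfold phi, psi;
    rewrite ?pr_pair1, ?pr_pair2; auto. }
  assert (E2 : psi ∘ phi = idm _).
  { apply (pr_ext Hq); rewrite comp_assoc, comp_id_r; unfold phi, psi;
    rewrite ?pr_pair1, ?pr_pair2; auto. }
  destruct (Hf (f' ∘ phi)) as [g [Pg Ug]].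
  exists g; split.
  - intros m' M1 M2.
    assert (ev ∘ (m' ∘ phi) = f' ∘ phi).
    { apply Pg; rewrite comp_assoc; [rewrite M1, <- comp_assoc|rewrite M2]; unfold phi;
      rewrite ?pr_pair1, ?pr_pair2; auto. }
    transitivity (ev ∘ (m' ∘ phi) ∘ psi).
    + rewrite <- !comp_assoc, E1, comp_id_r; reflexivity.
    + rewrite H, <- comp_assoc, E1, comp_id_r; reflexivity.
  - intros g' Pg'.
    set (m := pr_pair Hp (g' ∘ q1) q2).
    assert (ev ∘ (m ∘ psi) = f').
    { apply Pg'; rewrite comp_assoc; unfold m; [rewrite pr_pair1, <- comp_assoc|rewrite pr_pair2];
      unfold psi; rewrite ?pr_pair1, ?pr_pair2; auto. }
    apply (Ug g' m); unfold m; [apply pr_pair1|apply pr_pair2|].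
    rewrite <- H, <- comp_assoc, <- comp_assoc, E2, comp_id_r; reflexivity.
Qed.

Lemma cross_comp {e e' a p p' q x0 : C} {p1 : Hom p e} {p2 : Hom p a} (Hp : is_product p1 p2)
  {p1' : Hom p' e'} {p2' : Hom p' a} (Hp' : is_product p1' p2') {q1 : Hom q x0} {q2 : Hom q a}
  (g1 : Hom e' e) (g2 : Hom x0 e') :
  pr_pair Hp (g1 ∘ p1') p2' ∘ pr_pair Hp' (g2 ∘ q1) q2 = pr_pair Hp (g1 ∘ g2 ∘ q1) q2.
Proof.
  apply pr_uniq; rewrite comp_assoc; [rewrite pr_pair1|rewrite pr_pair2].
  - rewrite <- comp_assoc, pr_pair1, comp_assoc; reflexivity.
  - apply pr_pair2.
Qed.

Lemma eq_pre {a b c : C} {f g : Hom b c} (h : Hom a b) : f = g -> f ∘ h = g ∘ h.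
Proof. intros ->; reflexivity. Qed.
End Gen.

Record Topos (C : Category) := {
  tt : C; ttH : is_terminal tt;
  Om : C; tru : Hom tt Om;
  clH : forall (u x : C) (m : Hom u x), mono m -> exists chi : Hom x Om,
     (forall k : Hom u tt, is_pullback chi tru u m k) /\
     forall chi', (forall k : Hom u tt, is_pullback chi' tru u m k) -> chi' = chi;
  pbo : forall (a b c : C) (f : Hom a c) (g : Hom b c), C;
  pb1 : forall (a b c : C) (f : Hom a c) (g : Hom b c), Hom (pbo a b c f g) a;
  pb2 : forall (a b c : C) (f : Hom a c) (g : Hom b c), Hom (pbo a b c f g) b;
  pbH : forall (a b c : C) (f : Hom a c) (g : Hom b c), is_pullback f g (pbo a b c f g) (pb1 a b c f g) (pb2 a b c f g);
  pro : C -> C -> C;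
  pr1 : forall a b, Hom (pro a b) a;
  pr2 : forall a b, Hom (pro a b) b;
  prH : forall a b, is_product (pr1 a b) (pr2 a b);
  exo : C -> C -> C;
  exP : C -> C -> C;
  ex1 : forall a b, Hom (exP a b) (exo a b);
  ex2 : forall a b, Hom (exP a b) a;
  exev : forall a b, Hom (exP a b) b;
  exH : forall a b, is_exponential (ex1 a b) (ex2 a b) (exev a b)
}.
Arguments tt {C} : rename. Arguments ttH {C} : rename. Arguments Om {C} : rename. Arguments tru {C} : rename.
Arguments pbo {C} T {a b c} f g : rename. Arguments pb1 {C} T {a b c} f g : rename. Arguments pb2 {C} T {a b c} f g : rename.
Arguments pbH {C} T {a b c} f g : rename.
Arguments pro {C} T a b : rename. Arguments pr1 {C} T a b : rename. Arguments pr2 {C} T a b : rename. Arguments prH {C} T a b : rename.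
Arguments exo {C} T a b : rename. Arguments exP {C} T a b : rename. Arguments ex1 {C} T a b : rename. Arguments ex2 {C} T a b : rename.
Arguments exev {C} T a b : rename. Arguments clH {C} : rename. Arguments exH {C} T a b : rename.

Definition cid {A : Type} {P : A -> Prop} (H : exists x, P x) : {x | P x} :=
  constructive_indefinite_description P H.

Definition mkTopos (C : Category) (H : is_topos C) : Topos C.
Proof.
  destruct H as [[_ Hpb] [[Hpr Hex] Hcl]].
  destruct (cid Hcl) as [t Ht]. destruct (cid Ht) as [O HO]. destruct (cid HO) as [tr [Htt Hc]].
  assert (PB : forall (a b c : C) (f : Hom a c) (g : Hom b c),
     {p : C & {p1 : Hom p a & {p2 : Hom p b | is_pullback f g p p1 p2}}}).
  { intros a b c f g. destruct (cid (Hpb a b c f g)) as [p Hp]. destruct (cid Hp) as [p1 Hp1].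
    destruct (cid Hp1) as [p2 Hp2]. exact (existT _ p (existT _ p1 (exist _ p2 Hp2))). }
  assert (PR : forall (a b : C), {p : C & {p1 : Hom p a & {p2 : Hom p b | is_product p1 p2}}}).
  { intros a b. destruct (cid (Hpr a b)) as [p Hp]. destruct (cid Hp) as [p1 Hp1].
    destruct (cid Hp1) as [p2 Hp2]. exact (existT _ p (existT _ p1 (exist _ p2 Hp2))). }
  assert (EX : forall (a b : C), {e : C & {p : C & {p1 : Hom p e & {p2 : Hom p a & {ev : Hom p b | is_exponential p1 p2 ev}}}}}).
  { intros a b. destruct (cid (Hex a b)) as [e He]. destruct (cid He) as [p Hp].
    destruct (cid Hp) as [p1 Hp1]. destruct (cid Hp1) as [p2 Hp2]. destruct (cid Hp2) as [ev Hev].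
    exact (existT _ e (existT _ p (existT _ p1 (existT _ p2 (exist _ ev Hev))))). }
  refine {| tt := t; ttH := Htt; Om := O; tru := tr; clH := Hc;
    pbo := fun a b c f g => projT1 (PB a b c f g);
    pb1 := fun a b c f g => projT1 (projT2 (PB a b c f g));
    pb2 := fun a b c f g => proj1_sig (projT2 (projT2 (PB a b c f g)));
    pbH := fun a b c f g => proj2_sig (projT2 (projT2 (PB a b c f g)));
    pro := fun a b => projT1 (PR a b);
    pr1 := fun a b => projT1 (projT2 (PR a b));
    pr2 := fun a b => proj1_sig (projT2 (projT2 (PR a b)));
    prH := fun a b => proj2_sig (projT2 (projT2 (PR a b)));
    exo := fun a b => projT1 (EX a b);
    exP := fun a b => projT1 (projT2 (EX a b));
    ex1 := fun a b => projT1 (projT2 (projT2 (EX a b)));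
    ex2 := fun a b => projT1 (projT2 (projT2 (projT2 (EX a b))));
    exev := fun a b => proj1_sig (projT2 (projT2 (projT2 (projT2 (EX a b)))));
    exH := fun a b => proj2_sig (projT2 (projT2 (projT2 (projT2 (EX a b))))) |}.
Defined.

Section CL.
Context {C : Category} (T : Topos C).

Definition bg (x : C) : Hom x (tt T) := bang (ttH T) x.
Lemma bg_uniq {x} (f g : Hom x (tt T)) : f = g.
Proof. apply (term_uniq (ttH T)). Qed.

Definition holds {z x : C} (chi : Hom x (Om T)) (k : Hom z x) : Prop := chi ∘ k = tru T ∘ bg z.

Lemma holds_comp {z w x : C} (chi : Hom x (Om T)) (k : Hom z x) (h : Hom w z) :
  holds chi k -> holds chi (k ∘ h).
Proof. unfold holds; intro E. rewrite comp_assoc, E, <- comp_assoc. f_equal. apply bg_uniq. Qed.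

Lemma holds_assoc {w x y : C} (f : Hom y (Om T)) (g : Hom x y) (k : Hom w x) :
  holds (f ∘ g) k <-> holds f (g ∘ k).
Proof. unfold holds; rewrite comp_assoc; reflexivity. Qed.

Section CH.
Context {u x : C} {m : Hom u x} (Hm : mono m).
Definition char : Hom x (Om T) := proj1_sig (cid (clH T u x m Hm)).
Lemma char_pb : forall k, is_pullback char (tru T) u m k.
Proof. unfold char; destruct (cid _) as [c [H1 H2]]; exact H1. Qed.
Lemma char_uniq chi : (forall k, is_pullback chi (tru T) u m k) -> chi = char.
Proof. unfold char; destruct (cid _) as [c [H1 H2]]; exact (H2 chi). Qed.
Lemma char_m : holds char m.
Proof. exact (pb_comm (char_pb (bg u))). Qed.
Definition fact {z} (k : Hom z x) (E : holds char k) : Hom z u :=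
  pb_pair (char_pb (bg u)) k (bg z) E.
Lemma fact_eq {z} (k : Hom z x) E : m ∘ fact k E = k.
Proof. apply pb_pair1. Qed.
Lemma holds_char {z} (k : Hom z x) : holds char k <-> exists j, m ∘ j = k.
Proof.
  split.
  - intro E; exists (fact k E); apply fact_eq.
  - intros [j <-]. apply holds_comp, char_m.
Qed.
End CH.

Lemma pb_mono {a b c p : C} {f : Hom a c} {g : Hom b c} {p1 : Hom p a} {p2 : Hom p b} :
  is_pullback f g p p1 p2 -> mono g -> mono p1.
Proof.
  intros H Hg z u v E. apply (pb_ext H); auto. apply Hg.
  rewrite !comp_assoc, <- (pb_comm H), <- !comp_assoc, E; reflexivity.
Qed.

Lemma tru_mono : mono (tru T).
Proof. apply (mono_from_term (ttH T)). Qed.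

Lemma Om_ext {x : C} (chi1 chi2 : Hom x (Om T)) :
  (forall z (k : Hom z x), holds chi1 k <-> holds chi2 k) -> chi1 = chi2.
Proof.
  intro Hk.
  pose proof (pbH T chi1 (tru T)) as HP.
  set (s := pb1 T chi1 (tru T)) in *.
  set (k0 := pb2 T chi1 (tru T)) in *.
  assert (Ms : mono s) by exact (pb_mono HP tru_mono).
  assert (G : forall chi, (forall z (k : Hom z x), holds chi1 k <-> holds chi k) ->
              forall k, is_pullback chi (tru T) _ s k).
  { intros chi Hc k. assert (k = k0) by apply bg_uniq. subst k. split.
    - assert (E : holds chi1 s).
      { unfold holds. rewrite (pb_comm HP). f_equal; apply bg_uniq. }
      apply Hc in E. unfold holds in E; rewrite E; f_equal; apply bg_uniq.
    - intros q q1 q2 E.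
      assert (E' : holds chi q1) by (unfold holds; rewrite E; f_equal; apply bg_uniq).
      apply Hc in E'.
      assert (E2 : chi1 ∘ q1 = tru T ∘ q2) by (rewrite E'; f_equal; apply bg_uniq).
      exists (pb_pair HP q1 q2 E2). split; [apply pb_pair1|split; [apply pb_pair2|]].
      intros v V1 V2. apply pb_uniq; auto. }
  rewrite (char_uniq Ms chi1 (G chi1 (fun _ _ => conj (fun h => h) (fun h => h)))).
  symmetry. apply char_uniq. apply G. exact Hk.
Qed.

Definition OO := pro T (Om T) (Om T).
Definition ttt : Hom (tt T) OO := pr_pair (prH T _ _) (tru T) (tru T).
Definition conj_ : Hom OO (Om T) := char (mono_from_term (ttH T) ttt).

Lemma conj_holds {z} (h : Hom z OO) :
  holds conj_ h <-> holds (pr1 T _ _) h /\ holds (pr2 T _ _) h.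
Proof.
  unfold conj_. rewrite holds_char. split.
  - intros [j <-]. unfold holds, ttt. rewrite !comp_assoc, pr_pair1, pr_pair2.
    split; f_equal; apply bg_uniq.
  - intros [E1 E2]. exists (bg z). apply (pr_ext (prH T _ _)); unfold ttt;
      rewrite comp_assoc; [rewrite pr_pair1|rewrite pr_pair2]; symmetry; assumption.
Qed.

Section EQ.
Context {y z : C} (f1 f2 : Hom y z).
Definition ZZ := pro T z z.
Definition dlt : Hom z ZZ := pr_pair (prH T z z) (idm z) (idm z).
Definition ff : Hom y ZZ := pr_pair (prH T z z) f1 f2.
Local Notation Eq := (pbo T ff dlt).
Definition eqi : Hom Eq y := pb1 T ff dlt.
Lemma eqi_eq : f1 ∘ eqi = f2 ∘ eqi.
Proof.
  pose proof (pb_comm (pbH T ff dlt)) as E.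
  assert (E1 := f_equal (fun k => pr1 T z z ∘ k) E). assert (E2 := f_equal (fun k => pr2 T z z ∘ k) E).
  simpl in E1, E2. unfold eqi, ff, dlt in *.
  rewrite !comp_assoc, !pr_pair1, comp_id_l in E1. rewrite !comp_assoc, !pr_pair2, comp_id_l in E2. etransitivity; [exact E1|symmetry; exact E2].
Qed.
Lemma eqi_mono : mono eqi.
Proof.
  intros w u v E. apply (pb_ext (pbH T ff dlt)); [exact E|].
  assert (H : forall k : Hom w Eq, pb2 T ff dlt ∘ k = f1 ∘ (eqi ∘ k)).
  { intro k. pose proof (pb_comm (pbH T ff dlt)) as E'.
    assert (E1 := f_equal (fun k => pr1 T z z ∘ k) E'). simpl in E1. unfold ff, dlt in E1.
    rewrite !comp_assoc, pr_pair1, pr_pair1, comp_id_l in E1. unfold eqi, ff, dlt. rewrite comp_assoc, E1. reflexivity. }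
  rewrite !H, E; reflexivity.
Qed.
Lemma eq_lift_ex {w} (h : Hom w y) : f1 ∘ h = f2 ∘ h -> exists j, eqi ∘ j = h.
Proof.
  intro E. assert (E' : ff ∘ h = dlt ∘ (f1 ∘ h)).
  { apply (pr_ext (prH T z z)); unfold ff, dlt; rewrite !comp_assoc, ?pr_pair1, ?pr_pair2, comp_id_l; auto. }
  exists (pb_pair (pbH T ff dlt) h (f1 ∘ h) E'). apply pb_pair1.
Qed.
Definition eq_lift {w} (h : Hom w y) (E : f1 ∘ h = f2 ∘ h) : Hom w Eq := proj1_sig (cid (eq_lift_ex h E)).
Lemma eq_lift_eq {w} (h : Hom w y) E : eqi ∘ eq_lift h E = h.
Proof. unfold eq_lift; destruct (cid _); auto. Qed.
End EQ.

End CL.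

Section Main.
Context {A X : Category} (L : Functor A X) (R : Functor X A)
  (eta : forall a : A, Hom a (R (L a))) (eps : forall x : X, Hom (L (R x)) x)
  (eta_nat : forall (a a' : A) (f : Hom a a'), eta a' ∘ f = fmap R (fmap L f) ∘ eta a)
  (eps_nat : forall (x x' : X) (g : Hom x x'), g ∘ eps x = eps x' ∘ fmap L (fmap R g))
  (tri1 : forall a : A, eps (L a) ∘ fmap L (eta a) = idm (L a))
  (tri2 : forall x : X, fmap R (eps x) ∘ eta (R x) = idm (R x))
  (TA : Topos A) (TX : Topos X).
Definition tr {a : A} {x : X} (l : Hom (L a) x) : Hom a (R x) := fmap R l ∘ eta a.
Definition un {a : A} {x : X} (k : Hom a (R x)) : Hom (L a) x := eps x ∘ fmap L k.

Lemma tr_un {a x} (k : Hom a (R x)) : tr (un k) = k.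
Proof. unfold tr, un. rewrite fmap_comp, <- comp_assoc, <- eta_nat, comp_assoc, tri2, comp_id_l. reflexivity. Qed.
Lemma un_tr {a x} (l : Hom (L a) x) : un (tr l) = l.
Proof. unfold tr, un. rewrite fmap_comp, comp_assoc, <- eps_nat, <- comp_assoc, tri1, comp_id_r. reflexivity. Qed.
Lemma tr_inj {a x} (l l' : Hom (L a) x) : tr l = tr l' -> l = l'.
Proof. intro E. rewrite <- (un_tr l), <- (un_tr l'), E. reflexivity. Qed.
Lemma un_inj {a x} (k k' : Hom a (R x)) : un k = un k' -> k = k'.
Proof. intro E. rewrite <- (tr_un k), <- (tr_un k'), E. reflexivity. Qed.
Lemma tr_post {a x y} (g : Hom x y) (l : Hom (L a) x) : tr (g ∘ l) = fmap R g ∘ tr l.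
Proof. unfold tr. rewrite fmap_comp, comp_assoc. reflexivity. Qed.
Lemma tr_pre {a b x} (l : Hom (L b) x) (f : Hom a b) : tr (l ∘ fmap L f) = tr l ∘ f.
Proof. unfold tr. rewrite fmap_comp, <- !comp_assoc, eta_nat. reflexivity. Qed.
Lemma un_post {a x y} (g : Hom x y) (k : Hom a (R x)) : un (fmap R g ∘ k) = g ∘ un k.
Proof. apply tr_inj. rewrite tr_post, !tr_un. reflexivity. Qed.
Lemma un_pre {a b x} (k : Hom b (R x)) (f : Hom a b) : un (k ∘ f) = un k ∘ fmap L f.
Proof. apply tr_inj. rewrite tr_pre, !tr_un. reflexivity. Qed.

Lemma sq_tr {a b x y} (g : Hom x y) (l : Hom (L a) x) (l' : Hom (L b) y) (f : Hom a b) :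
  g ∘ l = l' ∘ fmap L f <-> fmap R g ∘ tr l = tr l' ∘ f.
Proof.
  split; intro E.
  - rewrite <- tr_post, <- tr_pre, E; reflexivity.
  - apply tr_inj. rewrite tr_post, tr_pre; exact E.
Qed.

Lemma R_term (t : X) : is_terminal t -> is_terminal (R t).
Proof.
  intros Ht a. exists (tr (bang Ht (L a))). intro g.
  rewrite <- (tr_un g). f_equal. apply (term_uniq Ht).
Qed.

Lemma R_prod {a b p : X} (p1 : Hom p a) (p2 : Hom p b) :
  is_product p1 p2 -> is_product (fmap R p1) (fmap R p2).
Proof.
  intros H q q1 q2. exists (tr (pr_pair H (un q1) (un q2))).
  split; [|split].
  - rewrite <- tr_post, pr_pair1, tr_un; reflexivity.
  - rewrite <- tr_post, pr_pair2, tr_un; reflexivity.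
  - intros v V1 V2. rewrite <- (tr_un v). f_equal. apply pr_uniq.
    + rewrite <- un_post, V1; reflexivity.
    + rewrite <- un_post, V2; reflexivity.
Qed.

Lemma R_pb {a b c p : X} (f : Hom a c) (g : Hom b c) (p1 : Hom p a) (p2 : Hom p b) :
  is_pullback f g p p1 p2 -> is_pullback (fmap R f) (fmap R g) (R p) (fmap R p1) (fmap R p2).
Proof.
  intros H. split.
  - rewrite <- !fmap_comp, (pb_comm H); reflexivity.
  - intros q q1 q2 E.
    assert (E' : f ∘ un q1 = g ∘ un q2) by (rewrite <- !un_post, E; reflexivity).
    exists (tr (pb_pair H (un q1) (un q2) E')).
    split; [|split].
    + rewrite <- tr_post, pb_pair1, tr_un; reflexivity.
    + rewrite <- tr_post, pb_pair2, tr_un; reflexivity.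
    + intros v V1 V2. rewrite <- (tr_un v). f_equal. apply pb_uniq.
      * rewrite <- un_post, V1; reflexivity.
      * rewrite <- un_post, V2; reflexivity.
Qed.


Lemma R_mono_term {y : X} (m : Hom (tt TX) y) : mono (fmap R m).
Proof. apply (mono_from_term (R_term _ (ttH TX))). Qed.
Lemma RtX_uniq {a} (f g : Hom a (R (tt TX))) : f = g.
Proof. exact (term_uniq (R_term _ (ttH TX)) f g). Qed.

Definition al (c : SCObj L) : Hom (sc_a c) (R (sc_x c)) := tr (sc_l c).
Definition be (c : SCObj L) : Hom (sc_b c) (R (sc_x c)) := tr (sc_r c).
Lemma sqa {c d : SCObj L} (u : SCHom c d) : fmap R (sc_g u) ∘ al c = al d ∘ sc_f u.
Proof. apply sq_tr, sc_sql. Qed.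
Lemma sqb {c d : SCObj L} (u : SCHom c d) : fmap R (sc_g u) ∘ be c = be d ∘ sc_h u.
Proof. apply sq_tr, sc_sqr. Qed.
Definition mkH (c d : SCObj L) f g h (E1 : fmap R g ∘ al c = al d ∘ f) (E2 : fmap R g ∘ be c = be d ∘ h)
  : SCHom c d :=
  Build_SCHom c d f g h (proj2 (sq_tr _ _ _ _) E1) (proj2 (sq_tr _ _ _ _) E2).
Definition mkOb (a b : A) (x : X) (α : Hom a (R x)) (β : Hom b (R x)) : SCObj L :=
  Build_SCObj L a b x (un α) (un β).
Lemma al_mk a b x α β : al (mkOb a b x α β) = α.
Proof. apply tr_un. Qed.
Lemma be_mk a b x α β : be (mkOb a b x α β) = β.
Proof. apply tr_un. Qed.

Notation SC := (StrCsp L).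

Definition one : SCObj L := mkOb (tt TA) (tt TA) (tt TX) (tr (bg TX _)) (tr (bg TX _)).
Definition toOne (c : SCObj L) : SCHom c one :=
  mkH c one (bg TA _) (bg TX _) (bg TA _) (RtX_uniq _ _) (RtX_uniq _ _).
Lemma one_uniq {c : SCObj L} (f g : SCHom c one) : f = g.
Proof. apply SCHom_eq; apply bg_uniq. Qed.
Lemma one_term : is_terminal (C:=SC) one.
Proof. intro c. exists (toOne c). intro g. apply one_uniq. Qed.

Section PBK.
Context {c1 c2 c3 : SCObj L} (f : SCHom c1 c3) (g : SCHom c2 c3).
Local Notation HA := (pbH TA (sc_f f) (sc_f g)).
Local Notation HX := (pbH TX (sc_g f) (sc_g g)).
Local Notation HB := (pbH TA (sc_h f) (sc_h g)).
Local Notation HRX := (R_pb _ _ _ _ HX).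

Lemma pbk_Ea : fmap R (sc_g f) ∘ (al c1 ∘ pb1 TA (sc_f f) (sc_f g)) =
               fmap R (sc_g g) ∘ (al c2 ∘ pb2 TA (sc_f f) (sc_f g)).
Proof. rewrite !comp_assoc, !sqa, <- !comp_assoc, (pb_comm HA); reflexivity. Qed.
Lemma pbk_Eb : fmap R (sc_g f) ∘ (be c1 ∘ pb1 TA (sc_h f) (sc_h g)) =
               fmap R (sc_g g) ∘ (be c2 ∘ pb2 TA (sc_h f) (sc_h g)).
Proof. rewrite !comp_assoc, !sqb, <- !comp_assoc, (pb_comm HB); reflexivity. Qed.

Definition PB : SCObj L := mkOb _ _ _ (pb_pair HRX _ _ pbk_Ea) (pb_pair HRX _ _ pbk_Eb).
Definition PB1 : SCHom PB c1.
Proof.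
  refine (mkH PB c1 (pb1 TA _ _) (pb1 TX _ _) (pb1 TA _ _) _ _); unfold PB;
    rewrite ?al_mk, ?be_mk; apply pb_pair1.
Defined.
Definition PB2 : SCHom PB c2.
Proof.
  refine (mkH PB c2 (pb2 TA _ _) (pb2 TX _ _) (pb2 TA _ _) _ _); unfold PB;
    rewrite ?al_mk, ?be_mk; apply pb_pair2.
Defined.

Lemma PB_is : is_pullback (C:=SC) f g PB PB1 PB2.
Proof.
  split.
  - apply SCHom_eq; simpl; apply pb_comm; [exact HA|exact HX|exact HB].
  - intros q q1 q2 E.
    assert (Ea : sc_f f ∘ sc_f q1 = sc_f g ∘ sc_f q2) by exact (f_equal (fun u => sc_f u) E).
    assert (Ex : sc_g f ∘ sc_g q1 = sc_g g ∘ sc_g q2) by exact (f_equal (fun u => sc_g u) E).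
    assert (Eb : sc_h f ∘ sc_h q1 = sc_h g ∘ sc_h q2) by exact (f_equal (fun u => sc_h u) E).
    set (ua := pb_pair HA _ _ Ea). set (ux := pb_pair HX _ _ Ex). set (ub := pb_pair HB _ _ Eb).
    assert (S1 : fmap R ux ∘ al q = al PB ∘ ua).
    { unfold PB; rewrite al_mk. apply (pb_ext HRX).
      - rewrite !comp_assoc, <- fmap_comp, pb_pair1. unfold ux; rewrite pb_pair1, sqa.
        unfold ua; rewrite <- comp_assoc, pb_pair1; reflexivity.
      - rewrite !comp_assoc, <- fmap_comp, pb_pair2. unfold ux; rewrite pb_pair2, sqa.
        unfold ua; rewrite <- comp_assoc, pb_pair2; reflexivity. }
    assert (S2 : fmap R ux ∘ be q = be PB ∘ ub).
    { unfold PB; rewrite be_mk. apply (pb_ext HRX).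
      - rewrite !comp_assoc, <- fmap_comp, pb_pair1. unfold ux; rewrite pb_pair1, sqb.
        unfold ub; rewrite <- comp_assoc, pb_pair1; reflexivity.
      - rewrite !comp_assoc, <- fmap_comp, pb_pair2. unfold ux; rewrite pb_pair2, sqb.
        unfold ub; rewrite <- comp_assoc, pb_pair2; reflexivity. }
    exists (mkH q PB ua ux ub S1 S2). split; [|split].
    + apply SCHom_eq; simpl; [unfold ua|unfold ux|unfold ub]; apply pb_pair1.
    + apply SCHom_eq; simpl; [unfold ua|unfold ux|unfold ub]; apply pb_pair2.
    + intros v V1 V2. apply SCHom_eq; simpl; [unfold ua|unfold ux|unfold ub]; apply pb_uniq.
      all: first [exact (f_equal (fun u => sc_f u) V1) | exact (f_equal (fun u => sc_f u) V2)
                 | exact (f_equal (fun u => sc_g u) V1) | exact (f_equal (fun u => sc_g u) V2)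
                 | exact (f_equal (fun u => sc_h u) V1) | exact (f_equal (fun u => sc_h u) V2)].
Qed.
End PBK.

Lemma mono_comp {c d : SCObj L} (m : SCHom c d) :
  mono (C:=SC) m -> mono (sc_f m) /\ mono (sc_g m) /\ mono (sc_h m).
Proof.
  intro Hm.
  assert (E : PB1 m m = PB2 m m) by (apply Hm; exact (pb_comm (PB_is m m))).
  assert (Ea := f_equal (fun u => sc_f u) E). assert (Ex := f_equal (fun u => sc_g u) E).
  assert (Eb := f_equal (fun u => sc_h u) E). simpl in Ea, Ex, Eb.
  split; [|split]; intros z u v Euv.
  - pose proof (pb_pair1 (pbH TA _ _) u v Euv) as E1; pose proof (pb_pair2 (pbH TA _ _) u v Euv) as E2; revert E1 E2; generalize (pb_pair (pbH TA _ _) u v Euv); intros w E1 E2; rewrite <- E1, <- E2, Ea; reflexivity.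
  - pose proof (pb_pair1 (pbH TX _ _) u v Euv) as E1; pose proof (pb_pair2 (pbH TX _ _) u v Euv) as E2; revert E1 E2; generalize (pb_pair (pbH TX _ _) u v Euv); intros w E1 E2; rewrite <- E1, <- E2, Ex; reflexivity.
  - pose proof (pb_pair1 (pbH TA _ _) u v Euv) as E1; pose proof (pb_pair2 (pbH TA _ _) u v Euv) as E2; revert E1 E2; generalize (pb_pair (pbH TA _ _) u v Euv); intros w E1 E2; rewrite <- E1, <- E2, Eb; reflexivity.
Qed.


Section PRD.
Context (c d : SCObj L).
Local Notation HA := (prH TA (sc_a c) (sc_a d)).
Local Notation HX := (prH TX (sc_x c) (sc_x d)).
Local Notation HB := (prH TA (sc_b c) (sc_b d)).
Local Notation HRX := (R_prod _ _ HX).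

Definition PR : SCObj L :=
  mkOb (pro TA (sc_a c) (sc_a d)) (pro TA (sc_b c) (sc_b d)) (pro TX (sc_x c) (sc_x d))
   (pr_pair HRX (al c ∘ pr1 TA _ _) (al d ∘ pr2 TA _ _))
   (pr_pair HRX (be c ∘ pr1 TA _ _) (be d ∘ pr2 TA _ _)).
Lemma al_PR : al PR = pr_pair HRX (al c ∘ pr1 TA _ _) (al d ∘ pr2 TA _ _).
Proof. apply al_mk. Qed.
Lemma be_PR : be PR = pr_pair HRX (be c ∘ pr1 TA _ _) (be d ∘ pr2 TA _ _).
Proof. apply be_mk. Qed.
Definition PR1 : SCHom PR c.
Proof.
  refine (mkH PR c (pr1 TA _ _) (pr1 TX _ _) (pr1 TA _ _) _ _);
    rewrite ?al_PR, ?be_PR; apply pr_pair1.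
Defined.
Definition PR2 : SCHom PR d.
Proof.
  refine (mkH PR d (pr2 TA _ _) (pr2 TX _ _) (pr2 TA _ _) _ _);
    rewrite ?al_PR, ?be_PR; apply pr_pair2.
Defined.

Lemma PR_is : is_product (C:=SC) PR1 PR2.
Proof.
  intros q q1 q2.
  set (ua := pr_pair HA (sc_f q1) (sc_f q2)). set (ux := pr_pair HX (sc_g q1) (sc_g q2)).
  set (ub := pr_pair HB (sc_h q1) (sc_h q2)).
  assert (S1 : fmap R ux ∘ al q = al PR ∘ ua).
  { rewrite al_PR. apply (pr_ext HRX).
    - rewrite !comp_assoc, <- fmap_comp, pr_pair1. unfold ux; rewrite pr_pair1, sqa.
      unfold ua; rewrite <- comp_assoc, pr_pair1; reflexivity.
    - rewrite !comp_assoc, <- fmap_comp, pr_pair2. unfold ux; rewrite pr_pair2, sqa.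
      unfold ua; rewrite <- comp_assoc, pr_pair2; reflexivity. }
  assert (S2 : fmap R ux ∘ be q = be PR ∘ ub).
  { rewrite be_PR. apply (pr_ext HRX).
    - rewrite !comp_assoc, <- fmap_comp, pr_pair1. unfold ux; rewrite pr_pair1, sqb.
      unfold ub; rewrite <- comp_assoc, pr_pair1; reflexivity.
    - rewrite !comp_assoc, <- fmap_comp, pr_pair2. unfold ux; rewrite pr_pair2, sqb.
      unfold ub; rewrite <- comp_assoc, pr_pair2; reflexivity. }
  exists (mkH q PR ua ux ub S1 S2). split; [|split].
  - apply SCHom_eq; simpl; [unfold ua|unfold ux|unfold ub]; apply pr_pair1.
  - apply SCHom_eq; simpl; [unfold ua|unfold ux|unfold ub]; apply pr_pair2.
  - intros v V1 V2. apply SCHom_eq; simpl; [unfold ua|unfold ux|unfold ub]; apply pr_uniq.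
    all: first [exact (f_equal (fun u => sc_f u) V1) | exact (f_equal (fun u => sc_f u) V2)
               | exact (f_equal (fun u => sc_g u) V1) | exact (f_equal (fun u => sc_g u) V2)
               | exact (f_equal (fun u => sc_h u) V1) | exact (f_equal (fun u => sc_h u) V2)].
Qed.
End PRD.

Section Side.
Context (x y : X) (a a' : A) (α : Hom a (R x)) (α' : Hom a' (R y)).
Local Notation HX := (exH TX x y).
Local Notation ey := (exo TX x y).
Local Notation evX := (exev TX x y).
Local Notation H1 := (exH TA a a').
Local Notation H2 := (exH TA a (R y)).
Local Notation ev1 := (exev TA a a').
Local Notation ev2 := (exev TA a (R y)).
Local Notation RPX := (R_prod _ _ (proj1 HX)).

Definition sd_u : Hom (exo TA a a') (exo TA a (R y)) := curry H2 (proj1 H1) (α' ∘ ev1).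
Definition sd_rho : Hom (pro TA (R ey) a) (R (exP TX x y)) :=
  pr_pair RPX (pr1 TA (R ey) a) (α ∘ pr2 TA (R ey) a).
Definition sd_v : Hom (R ey) (exo TA a (R y)) :=
  curry H2 (prH TA (R ey) a) (fmap R evX ∘ sd_rho).
Local Notation ea := (pbo TA sd_u sd_v).
Local Notation HE := (pbH TA sd_u sd_v).
Definition sd_pi : Hom ea (exo TA a a') := pb1 TA sd_u sd_v.
Definition sd_k : Hom ea (R ey) := pb2 TA sd_u sd_v.
Definition evX' : Hom (pro TX ey x) y :=
  evX ∘ pr_pair (proj1 HX) (idm ey ∘ pr1 TX ey x) (pr2 TX ey x).
Definition sd_ev : Hom (pro TA ea a) a' :=
  ev1 ∘ pr_pair (proj1 H1) (sd_pi ∘ pr1 TA ea a) (pr2 TA ea a).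

Lemma u_ev : ev2 ∘ pr_pair (proj1 H2) (sd_u ∘ ex1 TA a a') (ex2 TA a a') = α' ∘ ev1.
Proof. exact (curry_ev H2 (proj1 H1) (α' ∘ ev1)). Qed.
Lemma v_ev : ev2 ∘ pr_pair (proj1 H2) (sd_v ∘ pr1 TA (R ey) a) (pr2 TA (R ey) a) = fmap R evX ∘ sd_rho.
Proof. exact (curry_ev H2 (prH TA (R ey) a) _). Qed.

Lemma rho_cross {z c} (zeta : Hom c (R z)) (g : Hom z ey) :
  sd_rho ∘ pr_pair (prH TA (R ey) a) (fmap R g ∘ zeta ∘ pr1 TA c a) (pr2 TA c a) =
  fmap R (pr_pair (proj1 HX) (g ∘ pr1 TX z x) (pr2 TX z x)) ∘
    pr_pair (R_prod _ _ (prH TX z x)) (zeta ∘ pr1 TA c a) (α ∘ pr2 TA c a).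
Proof.
  apply (pr_ext RPX); unfold sd_rho; rewrite !comp_assoc, ?pr_pair1, ?pr_pair2;
    rewrite <- fmap_comp, ?pr_pair1, ?pr_pair2, ?fmap_comp.
  - rewrite <- !comp_assoc, pr_pair1, !comp_assoc; reflexivity.
  - rewrite <- !comp_assoc, pr_pair2; reflexivity.
Qed.

Lemma sd_sq :
  fmap R evX' ∘ pr_pair (R_prod _ _ (prH TX ey x)) (sd_k ∘ pr1 TA ea a) (α ∘ pr2 TA ea a) = α' ∘ sd_ev.
Proof.
  unfold evX'. rewrite fmap_comp, <- comp_assoc.
  pose proof (rho_cross (z:=ey) (c:=ea) sd_k (idm ey)) as RC. rewrite fmap_id, comp_id_l in RC.
  rewrite <- RC, comp_assoc, <- v_ev, <- comp_assoc.
  rewrite (cross_comp (proj1 H2) (prH TA (R ey) a) sd_v sd_k).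
  unfold sd_k. rewrite <- (pb_comm HE). fold sd_pi.
  rewrite <- (cross_comp (proj1 H2) (proj1 H1) sd_u sd_pi), comp_assoc, u_ev.
  unfold sd_ev. rewrite comp_assoc. reflexivity.
Qed.

Section Exist.
Context {z : X} {c : A} (zeta : Hom c (R z)) (gx : Hom z ey) (fa : Hom (pro TA c a) a')
  (Hyp : fmap R (evX ∘ pr_pair (proj1 HX) (gx ∘ pr1 TX z x) (pr2 TX z x)) ∘
         pr_pair (R_prod _ _ (prH TX z x)) (zeta ∘ pr1 TA c a) (α ∘ pr2 TA c a) = α' ∘ fa).
Definition sd_cf : Hom c (exo TA a a') := curry H1 (prH TA c a) fa.
Lemma sd_E : sd_u ∘ sd_cf = sd_v ∘ (fmap R gx ∘ zeta).
Proof.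
  transitivity (curry H2 (prH TA c a) (α' ∘ fa)); [|symmetry]; apply curry_uniq; unfold exm.
  - rewrite <- (cross_comp (proj1 H2) (proj1 H1) sd_u sd_cf), comp_assoc, u_ev, <- comp_assoc.
    unfold sd_cf. pose proof (curry_ev H1 (prH TA c a) fa) as CE; unfold exm in CE; rewrite CE; reflexivity.
  - rewrite <- (cross_comp (proj1 H2) (prH TA (R ey) a) sd_v (fmap R gx ∘ zeta)), comp_assoc, v_ev.
    rewrite <- comp_assoc, rho_cross, comp_assoc, <- fmap_comp. exact Hyp.
Qed.
Definition sd_g : Hom c ea := pb_pair HE sd_cf (fmap R gx ∘ zeta) sd_E.
Lemma sd_g_k : sd_k ∘ sd_g = fmap R gx ∘ zeta.
Proof. apply pb_pair2. Qed.
Lemma sd_g_ev : sd_ev ∘ pr_pair (prH TA ea a) (sd_g ∘ pr1 TA c a) (pr2 TA c a) = fa.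
Proof.
  unfold sd_ev. rewrite <- comp_assoc, (cross_comp (proj1 H1) (prH TA ea a) sd_pi sd_g).
  unfold sd_pi, sd_g. rewrite pb_pair1. fold sd_cf. exact (curry_ev H1 (prH TA c a) fa).
Qed.
End Exist.

Lemma sd_uniq {c} (g g' : Hom c ea) :
  sd_k ∘ g = sd_k ∘ g' ->
  sd_ev ∘ pr_pair (prH TA ea a) (g ∘ pr1 TA c a) (pr2 TA c a) =
  sd_ev ∘ pr_pair (prH TA ea a) (g' ∘ pr1 TA c a) (pr2 TA c a) -> g = g'.
Proof.
  intros Ek Ev. apply (pb_ext HE); [|exact Ek]. fold sd_pi.
  unfold sd_ev in Ev. rewrite <- !comp_assoc, !(cross_comp (proj1 H1) (prH TA ea a) sd_pi) in Ev.
  rewrite (curry_uniq H1 (prH TA c a) _ (sd_pi ∘ g) eq_refl).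
  symmetry; apply curry_uniq. unfold exm. symmetry; exact Ev.
Qed.

Lemma evX_uniq {z} (g g' : Hom z ey) :
  evX' ∘ pr_pair (prH TX ey x) (g ∘ pr1 TX z x) (pr2 TX z x) =
  evX' ∘ pr_pair (prH TX ey x) (g' ∘ pr1 TX z x) (pr2 TX z x) -> g = g'.
Proof.
  unfold evX'. rewrite <- !comp_assoc, !(cross_comp (proj1 HX) (prH TX ey x) (idm ey)), !comp_id_l.
  intro E. rewrite (curry_uniq HX (prH TX z x) _ g eq_refl).
  symmetry; apply curry_uniq. unfold exm. symmetry; exact E.
Qed.
Lemma evX_curry {z} (f : Hom (pro TX z x) y) :
  evX' ∘ pr_pair (prH TX ey x) (curry HX (prH TX z x) f ∘ pr1 TX z x) (pr2 TX z x) = f.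
Proof.
  unfold evX'. rewrite <- comp_assoc, (cross_comp (proj1 HX) (prH TX ey x) (idm ey)), comp_id_l.
  exact (curry_ev HX (prH TX z x) f).
Qed.
End Side.

Section EXPO.
Context (C0 D : SCObj L).
Local Notation x := (sc_x C0). Local Notation y := (sc_x D).
Local Notation a := (sc_a C0). Local Notation a' := (sc_a D).
Local Notation b := (sc_b C0). Local Notation b' := (sc_b D).
Local Notation ka := (sd_k x y a a' (al C0) (al D)).
Local Notation kb := (sd_k x y b b' (be C0) (be D)).

Definition EE : SCObj L := mkOb _ _ (exo TX x y) ka kb.
Lemma al_EE : al EE = ka.
Proof. apply al_mk. Qed.
Lemma be_EE : be EE = kb.
Proof. apply be_mk. Qed.

Definition EV : SCHom (PR EE C0) D.
Proof.
  refine (mkH (PR EE C0) D (sd_ev x y a a' (al C0) (al D)) (evX' x y)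
                           (sd_ev x y b b' (be C0) (be D)) _ _).
  - rewrite al_PR, al_EE. exact (sd_sq x y a a' (al C0) (al D)).
  - rewrite be_PR, be_EE. exact (sd_sq x y b b' (be C0) (be D)).
Defined.

Lemma EXP_is : is_exponential (C:=SC) (PR1 EE C0) (PR2 EE C0) EV.
Proof.
  apply exp_intro; [apply PR_is|]. intro Z.
  exists (PR Z C0), (PR1 Z C0), (PR2 Z C0). split; [apply PR_is|]. intro f.
  set (gx := curry (exH TX x y) (prH TX (sc_x Z) x) (sc_g f)).
  assert (CE : exev TX x y ∘ pr_pair (proj1 (exH TX x y)) (gx ∘ pr1 TX (sc_x Z) x) (pr2 TX (sc_x Z) x)
               = sc_g f) by exact (curry_ev (exH TX x y) (prH TX (sc_x Z) x) (sc_g f)).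
  assert (HypA : fmap R (exev TX x y ∘ pr_pair (proj1 (exH TX x y)) (gx ∘ pr1 TX (sc_x Z) x) (pr2 TX (sc_x Z) x))
     ∘ pr_pair (R_prod _ _ (prH TX (sc_x Z) x)) (al Z ∘ pr1 TA (sc_a Z) a) (al C0 ∘ pr2 TA (sc_a Z) a)
     = al D ∘ sc_f f).
  { rewrite CE. pose proof (sqa f) as S. rewrite al_PR in S. exact S. }
  assert (HypB : fmap R (exev TX x y ∘ pr_pair (proj1 (exH TX x y)) (gx ∘ pr1 TX (sc_x Z) x) (pr2 TX (sc_x Z) x))
     ∘ pr_pair (R_prod _ _ (prH TX (sc_x Z) x)) (be Z ∘ pr1 TA (sc_b Z) b) (be C0 ∘ pr2 TA (sc_b Z) b)
     = be D ∘ sc_h f).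
  { rewrite CE. pose proof (sqb f) as S. rewrite be_PR in S. exact S. }
  set (ga := sd_g x y a a' (al C0) (al D) (al Z) gx (sc_f f) HypA).
  set (gb := sd_g x y b b' (be C0) (be D) (be Z) gx (sc_h f) HypB).
  assert (S1 : fmap R gx ∘ al Z = al EE ∘ ga).
  { rewrite al_EE. exact (eq_sym (sd_g_k x y a a' (al C0) (al D) (al Z) gx (sc_f f) HypA)). }
  assert (S2 : fmap R gx ∘ be Z = be EE ∘ gb).
  { rewrite be_EE. exact (eq_sym (sd_g_k x y b b' (be C0) (be D) (be Z) gx (sc_h f) HypB)). }
  exists (mkH Z EE ga gx gb S1 S2). split.
  - intros m M1 M2.
    assert (Ma1 := f_equal (fun u => sc_f u) M1). assert (Ma2 := f_equal (fun u => sc_f u) M2).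
    assert (Mx1 := f_equal (fun u => sc_g u) M1). assert (Mx2 := f_equal (fun u => sc_g u) M2).
    assert (Mb1 := f_equal (fun u => sc_h u) M1). assert (Mb2 := f_equal (fun u => sc_h u) M2).
    simpl in Ma1, Ma2, Mx1, Mx2, Mb1, Mb2.
    apply SCHom_eq; simpl.
    + rewrite (pr_uniq (prH TA _ _) _ _ (sc_f m) Ma1 Ma2). exact (sd_g_ev x y a a' (al C0) (al D) (al Z) gx (sc_f f) HypA).
    + rewrite (pr_uniq (prH TX _ _) _ _ (sc_g m) Mx1 Mx2). exact (evX_curry x y (sc_g f)).
    + rewrite (pr_uniq (prH TA _ _) _ _ (sc_h m) Mb1 Mb2). exact (sd_g_ev x y b b' (be C0) (be D) (be Z) gx (sc_h f) HypB).
  - intros g' m M1 M2 Ev.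
    assert (Ma1 := f_equal (fun u => sc_f u) M1). assert (Ma2 := f_equal (fun u => sc_f u) M2).
    assert (Mx1 := f_equal (fun u => sc_g u) M1). assert (Mx2 := f_equal (fun u => sc_g u) M2).
    assert (Mb1 := f_equal (fun u => sc_h u) M1). assert (Mb2 := f_equal (fun u => sc_h u) M2).
    assert (Eva := f_equal (fun u => sc_f u) Ev). assert (Evx := f_equal (fun u => sc_g u) Ev).
    assert (Evb := f_equal (fun u => sc_h u) Ev).
    simpl in Ma1, Ma2, Mx1, Mx2, Mb1, Mb2, Eva, Evx, Evb.
    rewrite (pr_uniq (prH TA _ _) _ _ (sc_f m) Ma1 Ma2) in Eva.
    rewrite (pr_uniq (prH TX _ _) _ _ (sc_g m) Mx1 Mx2) in Evx.
    rewrite (pr_uniq (prH TA _ _) _ _ (sc_h m) Mb1 Mb2) in Evb.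
    assert (GX : sc_g g' = gx).
    { apply (evX_uniq x y). etransitivity; [exact Evx|]. symmetry. apply evX_curry. }
    apply SCHom_eq; simpl; [|exact GX|].
    + apply (sd_uniq x y a a' (al C0) (al D)).
      * pose proof (sqa g') as S. rewrite al_EE in S. etransitivity; [symmetry; exact S|]. rewrite GX. exact (eq_sym (sd_g_k x y a a' (al C0) (al D) (al Z) gx (sc_f f) HypA)).
      * etransitivity; [exact Eva|]. symmetry. exact (sd_g_ev x y a a' (al C0) (al D) (al Z) gx (sc_f f) HypA).
    + apply (sd_uniq x y b b' (be C0) (be D)).
      * pose proof (sqb g') as S. rewrite be_EE in S. etransitivity; [symmetry; exact S|]. rewrite GX. exact (eq_sym (sd_g_k x y b b' (be C0) (be D) (be Z) gx (sc_h f) HypB)).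
      * etransitivity; [exact Evb|]. symmetry. exact (sd_g_ev x y b b' (be C0) (be D) (be Z) gx (sc_h f) HypB).
Qed.
End EXPO.

Lemma R_mono {x y : X} (m : Hom x y) : mono m -> mono (fmap R m).
Proof. intros Hm z f g E. apply un_inj. apply Hm. rewrite <- !un_post, E. reflexivity. Qed.

Section CLS.
Local Notation Q := (pro TA (Om TA) (R (Om TX))).
Local Notation q1 := (pr1 TA (Om TA) (R (Om TX))).
Local Notation q2 := (pr2 TA (Om TA) (R (Om TX))).
Local Notation HQ := (prH TA (Om TA) (R (Om TX))).
Definition RtM : mono (fmap R (tru TX)) := R_mono_term (tru TX).
Definition tau : Hom (R (Om TX)) (Om TA) := char TA RtM.
Definition F1 : Hom Q (Om TA) := conj_ TA ∘ pr_pair (prH TA (Om TA) (Om TA)) q1 (tau ∘ q2).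
Local Notation PA := (pbo TA (ff TA F1 q1) (dlt TA)).
Local Notation e := (eqi TA F1 q1).
Definition kP : Hom PA (R (Om TX)) := q2 ∘ e.

Lemma tau_tru {w} (h : Hom w (R (tt TX))) : holds TA tau (fmap R (tru TX) ∘ h).
Proof. apply holds_comp, char_m. Qed.

Lemma F1_holds {w} (m : Hom w Q) : holds TA F1 m <-> holds TA q1 m /\ holds TA tau (q2 ∘ m).
Proof.
  unfold F1. rewrite holds_assoc, conj_holds, <- !holds_assoc, pr_pair1, pr_pair2, holds_assoc.
  reflexivity.
Qed.

Lemma P_crit {c} (h : Hom c Q) :
  (forall w (k : Hom w c), holds TA q1 (h ∘ k) -> holds TA tau (q2 ∘ (h ∘ k))) -> F1 ∘ h = q1 ∘ h.
Proof.
  intro Hh. apply (Om_ext TA). intros w k. rewrite !holds_assoc, F1_holds.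
  split; [tauto|]. intro H1. split; auto.
Qed.

Lemma P_use {c} (j : Hom c PA) {w} (k : Hom w c) :
  holds TA q1 (e ∘ j ∘ k) -> holds TA tau (q2 ∘ (e ∘ j ∘ k)).
Proof.
  intro H. rewrite <- comp_assoc in *. rewrite <- holds_assoc in H.
  rewrite <- (eqi_eq TA F1 q1), holds_assoc in H. apply F1_holds in H. apply H.
Qed.

Definition OmS : SCObj L := mkOb PA PA (Om TX) kP kP.
Local Notation aT := (tr (bg TX (L (tt TA)))).
Definition tph : Hom (tt TA) Q := pr_pair HQ (tru TA) (fmap R (tru TX) ∘ aT).
Lemma tph_E : F1 ∘ tph = q1 ∘ tph.
Proof.
  apply P_crit. intros w k _. unfold tph. rewrite comp_assoc, pr_pair2, <- comp_assoc. apply tau_tru.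
Qed.
Definition tp : Hom (tt TA) PA := eq_lift TA F1 q1 tph tph_E.
Lemma e_tp : e ∘ tp = tph.
Proof. apply eq_lift_eq. Qed.
Lemma kP_tp : kP ∘ tp = fmap R (tru TX) ∘ aT.
Proof. unfold kP. rewrite <- comp_assoc, e_tp. unfold tph. apply pr_pair2. Qed.

Definition truS : SCHom one OmS.
Proof.
  refine (mkH one OmS tp (tru TX) tp _ _); unfold OmS, one; rewrite ?al_mk, ?be_mk;
    symmetry; apply kP_tp.
Defined.


Section MONO.
Context {U D : SCObj L} (m : SCHom U D) (Hm : mono (C:=SC) m).
Definition Ma : mono (sc_f m) := proj1 (mono_comp m Hm).
Definition Mx : mono (sc_g m) := proj1 (proj2 (mono_comp m Hm)).
Definition Mb : mono (sc_h m) := proj2 (proj2 (mono_comp m Hm)).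
Local Notation chx := (char TX Mx).

Lemma CMx : chx ∘ sc_g m = tru TX ∘ bg TX (sc_x U).
Proof. exact (char_m TX Mx). Qed.

Lemma key_a {w} (j : Hom w (sc_a U)) : holds TA tau (fmap R chx ∘ (al D ∘ (sc_f m ∘ j))).
Proof.
  rewrite (comp_assoc _ _ _ _ _ (al D) (sc_f m) j), <- sqa, <- !comp_assoc, comp_assoc, <- fmap_comp, CMx,
    fmap_comp, <- comp_assoc.
  apply tau_tru.
Qed.
Lemma key_b {w} (j : Hom w (sc_b U)) : holds TA tau (fmap R chx ∘ (be D ∘ (sc_h m ∘ j))).
Proof.
  rewrite (comp_assoc _ _ _ _ _ (be D) (sc_h m) j), <- sqb, <- !comp_assoc, comp_assoc, <- fmap_comp, CMx,
    fmap_comp, <- comp_assoc.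
  apply tau_tru.
Qed.

Definition ha : Hom (sc_a D) Q := pr_pair HQ (char TA Ma) (fmap R chx ∘ al D).
Definition hb : Hom (sc_b D) Q := pr_pair HQ (char TA Mb) (fmap R chx ∘ be D).
Lemma ha_E : F1 ∘ ha = q1 ∘ ha.
Proof.
  apply P_crit. intros w k H. unfold ha in *. rewrite <- holds_assoc, pr_pair1 in H.
  apply (holds_char TA Ma) in H. destruct H as [j <-].
  rewrite comp_assoc, pr_pair2, <- !comp_assoc. apply key_a.
Qed.
Lemma hb_E : F1 ∘ hb = q1 ∘ hb.
Proof.
  apply P_crit. intros w k H. unfold hb in *. rewrite <- holds_assoc, pr_pair1 in H.
  apply (holds_char TA Mb) in H. destruct H as [j <-].
  rewrite comp_assoc, pr_pair2, <- !comp_assoc. apply key_b.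
Qed.
Definition cha : Hom (sc_a D) PA := eq_lift TA F1 q1 ha ha_E.
Definition chb : Hom (sc_b D) PA := eq_lift TA F1 q1 hb hb_E.
Lemma e_cha : e ∘ cha = ha. Proof. apply eq_lift_eq. Qed.
Lemma e_chb : e ∘ chb = hb. Proof. apply eq_lift_eq. Qed.

Definition chi : SCHom D OmS.
Proof.
  refine (mkH D OmS cha chx chb _ _); unfold OmS; rewrite ?al_mk, ?be_mk; unfold kP;
    rewrite <- comp_assoc; [rewrite e_cha; unfold ha|rewrite e_chb; unfold hb];
    rewrite pr_pair2; reflexivity.
Defined.

Lemma chi_comm (k : SCHom U one) : comp (C:=SC) chi m = comp (C:=SC) truS k.
Proof.
  apply SCHom_eq; simpl.
  - apply (eqi_mono TA F1 q1). rewrite !comp_assoc, e_cha, e_tp.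
    apply (pr_ext HQ); rewrite !comp_assoc; unfold ha, tph; rewrite ?pr_pair1, ?pr_pair2.
    + pose proof (char_m TA Ma) as C1. unfold holds in C1. rewrite C1. f_equal; apply bg_uniq.
    + rewrite <- !comp_assoc, <- sqa, !comp_assoc, <- fmap_comp, CMx, fmap_comp, <- !comp_assoc.
      f_equal; apply RtX_uniq.
  - rewrite CMx. f_equal; apply bg_uniq.
  - apply (eqi_mono TA F1 q1). rewrite !comp_assoc, e_chb, e_tp.
    apply (pr_ext HQ); rewrite !comp_assoc; unfold hb, tph; rewrite ?pr_pair1, ?pr_pair2.
    + pose proof (char_m TA Mb) as C1. unfold holds in C1. rewrite C1. f_equal; apply bg_uniq.
    + rewrite <- !comp_assoc, <- sqb, !comp_assoc, <- fmap_comp, CMx, fmap_comp, <- !comp_assoc.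
      f_equal; apply RtX_uniq.
Qed.


Lemma chi_pb (k : SCHom U one) : is_pullback (C:=SC) chi truS U m k.
Proof.
  split; [apply chi_comm|]. intros q r1 r2 E.
  assert (Ea : cha ∘ sc_f r1 = tp ∘ sc_f r2) by exact (f_equal (fun u => sc_f u) E).
  assert (Ex : chx ∘ sc_g r1 = tru TX ∘ sc_g r2) by exact (f_equal (fun u => sc_g u) E).
  assert (Eb : chb ∘ sc_h r1 = tp ∘ sc_h r2) by exact (f_equal (fun u => sc_h u) E).
  assert (Ha : holds TA (char TA Ma) (sc_f r1)).
  { assert (Ea' : q1 ∘ (e ∘ cha) ∘ sc_f r1 = q1 ∘ (e ∘ tp) ∘ sc_f r2)
      by (rewrite <- !comp_assoc, Ea; reflexivity).
    rewrite e_cha, e_tp in Ea'. unfold ha, tph in Ea'. rewrite !pr_pair1 in Ea'.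
    unfold holds. rewrite Ea'. f_equal; apply bg_uniq. }
  assert (Hb : holds TA (char TA Mb) (sc_h r1)).
  { assert (Eb' : q1 ∘ (e ∘ chb) ∘ sc_h r1 = q1 ∘ (e ∘ tp) ∘ sc_h r2)
      by (rewrite <- !comp_assoc, Eb; reflexivity).
    rewrite e_chb, e_tp in Eb'. unfold hb, tph in Eb'. rewrite !pr_pair1 in Eb'.
    unfold holds. rewrite Eb'. f_equal; apply bg_uniq. }
  assert (Hx : holds TX chx (sc_g r1)).
  { unfold holds. rewrite Ex. f_equal; apply bg_uniq. }
  set (ua := fact TA Ma (sc_f r1) Ha). set (ux := fact TX Mx (sc_g r1) Hx).
  set (ub := fact TA Mb (sc_h r1) Hb).
  assert (S1 : fmap R ux ∘ al q = al U ∘ ua).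
  { apply (R_mono _ Mx). rewrite !comp_assoc, <- fmap_comp. unfold ux; rewrite fact_eq, sqa, sqa.
    rewrite <- comp_assoc. unfold ua; rewrite fact_eq. reflexivity. }
  assert (S2 : fmap R ux ∘ be q = be U ∘ ub).
  { apply (R_mono _ Mx). rewrite !comp_assoc, <- fmap_comp. unfold ux; rewrite fact_eq, sqb, sqb.
    rewrite <- comp_assoc. unfold ub; rewrite fact_eq. reflexivity. }
  exists (mkH q U ua ux ub S1 S2). split; [|split].
  - apply SCHom_eq; simpl; apply fact_eq.
  - apply one_uniq.
  - intros v V1 V2. apply SCHom_eq; simpl.
    + apply Ma. unfold ua; rewrite fact_eq. exact (f_equal (fun u => sc_f u) V1).
    + apply Mx. unfold ux; rewrite fact_eq. exact (f_equal (fun u => sc_g u) V1).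
    + apply Mb. unfold ub; rewrite fact_eq. exact (f_equal (fun u => sc_h u) V1).
Qed.


Section UNIQ.
Context (chi' : SCHom D OmS) (H' : forall k : SCHom U one, is_pullback (C:=SC) chi' truS U m k).
Lemma comm' : comp (C:=SC) chi' m = comp (C:=SC) truS (toOne U).
Proof. exact (proj1 (H' (toOne U))). Qed.
Lemma comm'a : sc_f chi' ∘ sc_f m = tp ∘ bg TA (sc_a U).
Proof. exact (f_equal (fun u => sc_f u) comm'). Qed.
Lemma comm'x : sc_g chi' ∘ sc_g m = tru TX ∘ bg TX (sc_x U).
Proof. exact (f_equal (fun u => sc_g u) comm'). Qed.
Lemma comm'b : sc_h chi' ∘ sc_h m = tp ∘ bg TA (sc_b U).
Proof. exact (f_equal (fun u => sc_h u) comm'). Qed.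

Lemma uniq_x : sc_g chi' = chx.
Proof.
  apply (char_uniq TX Mx). intro k. split.
  - etransitivity; [exact comm'x|]. f_equal; apply bg_uniq.
  - intros z r1 r2 Er.
    set (Q' := mkOb (pbo TA (al D ∘ sc_f m) (fmap R r1)) (pbo TA (be D ∘ sc_h m) (fmap R r1)) z
                    (pb2 TA _ _) (pb2 TA _ _)).
    assert (S1 : fmap R r1 ∘ al Q' = al D ∘ (sc_f m ∘ pb1 TA (al D ∘ sc_f m) (fmap R r1))).
    { unfold Q'; rewrite al_mk. rewrite comp_assoc. symmetry. apply pb_comm, pbH. }
    assert (S2 : fmap R r1 ∘ be Q' = be D ∘ (sc_h m ∘ pb1 TA (be D ∘ sc_h m) (fmap R r1))).
    { unfold Q'; rewrite be_mk. rewrite comp_assoc. symmetry. apply pb_comm, pbH. }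
    set (qD := mkH Q' D _ r1 _ S1 S2).
    assert (Cone : comp (C:=SC) chi' qD = comp (C:=SC) truS (toOne Q')).
    { apply SCHom_eq; simpl.
      - rewrite comp_assoc. etransitivity; [apply (eq_pre _ comm'a)|]. rewrite <- comp_assoc. f_equal; apply bg_uniq.
      - rewrite Er. f_equal; apply bg_uniq.
      - rewrite comp_assoc. etransitivity; [apply (eq_pre _ comm'b)|]. rewrite <- comp_assoc. f_equal; apply bg_uniq. }
    destruct (proj2 (H' (toOne U)) Q' qD (toOne Q') Cone) as [u [U1 _]].
    assert (Ux : sc_g m ∘ sc_g u = r1) by exact (f_equal (fun u => sc_g u) U1).
    exists (sc_g u). split; [exact Ux|split; [apply bg_uniq|]].
    intros v V1 _. apply Mx. rewrite V1; symmetry; exact Ux.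
Qed.

Lemma uniq_a : sc_f chi' = cha.
Proof.
  pose proof (sqa chi') as S. assert (AO : al OmS = kP) by apply al_mk. rewrite AO in S. unfold kP in S.
  assert (Eq2 : forall w (k : Hom w (sc_a D)), q2 ∘ (e ∘ sc_f chi' ∘ k) = fmap R chx ∘ (al D ∘ k)).
  { intros w k. rewrite !comp_assoc. apply eq_pre. etransitivity; [symmetry; exact S|]. rewrite uniq_x; reflexivity. }
  apply (eqi_mono TA F1 q1). rewrite e_cha. apply (pr_ext HQ).
  2: { rewrite comp_assoc. etransitivity; [symmetry; exact S|]. rewrite uniq_x. unfold ha; rewrite pr_pair2. reflexivity. }
  unfold ha; rewrite pr_pair1. apply (Om_ext TA). intros w k. split.
  - intro H.
    assert (HP := P_use (sc_f chi') k). rewrite Eq2 in HP.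
    assert (H0 : holds TA q1 (e ∘ sc_f chi' ∘ k)) by (rewrite <- holds_assoc; exact H).
    apply HP in H0. apply (holds_char TA RtM) in H0. destruct H0 as [j Ej].
    pose proof (R_pb _ _ _ _ (char_pb TX Mx (bg TX (sc_x U)))) as RP.
    set (w0 := pb_pair RP (al D ∘ k) j (eq_sym Ej)).
    set (Q'' := mkOb w (sc_b U) (sc_x U) w0 (be U)).
    assert (S1 : fmap R (sc_g m) ∘ al Q'' = al D ∘ k).
    { unfold Q''; rewrite al_mk. unfold w0; apply pb_pair1. }
    assert (S2 : fmap R (sc_g m) ∘ be Q'' = be D ∘ sc_h m).
    { unfold Q''; rewrite be_mk. exact (sqb m). }
    set (qD := mkH Q'' D k (sc_g m) (sc_h m) S1 S2).
    assert (Cone : comp (C:=SC) chi' qD = comp (C:=SC) truS (toOne Q'')).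
    { apply SCHom_eq; simpl.
      - apply (eqi_mono TA F1 q1). rewrite !comp_assoc. rewrite e_tp.
        apply (pr_ext HQ); rewrite !comp_assoc; unfold tph; rewrite ?pr_pair1, ?pr_pair2.
        + unfold holds in H. rewrite !comp_assoc in H. rewrite H. f_equal; apply bg_uniq.
        + transitivity (fmap R chx ∘ (al D ∘ k)); [rewrite <- Eq2, !comp_assoc; reflexivity|]. rewrite <- S1.
          rewrite comp_assoc, <- fmap_comp, CMx, fmap_comp, <- !comp_assoc. f_equal; apply RtX_uniq.
      - etransitivity; [exact comm'x|]. f_equal; apply bg_uniq.
      - etransitivity; [exact comm'b|]. f_equal; apply bg_uniq. }
    destruct (proj2 (H' (toOne U)) Q'' qD (toOne Q'') Cone) as [u [U1 _]].
    apply (holds_char TA Ma). exists (sc_f u). exact (f_equal (fun u => sc_f u) U1).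
  - intro H. apply (holds_char TA Ma) in H. destruct H as [j <-].
    unfold holds. pose proof comm'a as CA. cbn [sc_a sc_b sc_x OmS mkOb] in CA |- *. rewrite <- !comp_assoc, (comp_assoc _ _ _ _ _ _ (sc_f m) j), CA.
    rewrite <- !comp_assoc, (cl e_tp), comp_assoc. unfold tph; rewrite pr_pair1. f_equal; apply bg_uniq.
Qed.

Lemma uniq_b : sc_h chi' = chb.
Proof.
  pose proof (sqb chi') as S. assert (AO : be OmS = kP) by apply be_mk. rewrite AO in S. unfold kP in S.
  assert (Eq2 : forall w (k : Hom w (sc_b D)), q2 ∘ (e ∘ sc_h chi' ∘ k) = fmap R chx ∘ (be D ∘ k)).
  { intros w k. rewrite !comp_assoc. apply eq_pre. etransitivity; [symmetry; exact S|]. rewrite uniq_x; reflexivity. }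
  apply (eqi_mono TA F1 q1). rewrite e_chb. apply (pr_ext HQ).
  2: { rewrite comp_assoc. etransitivity; [symmetry; exact S|]. rewrite uniq_x. unfold hb; rewrite pr_pair2. reflexivity. }
  unfold hb; rewrite pr_pair1. apply (Om_ext TA). intros w k. split.
  - intro H.
    assert (HP := P_use (sc_h chi') k). rewrite Eq2 in HP.
    assert (H0 : holds TA q1 (e ∘ sc_h chi' ∘ k)) by (rewrite <- holds_assoc; exact H).
    apply HP in H0. apply (holds_char TA RtM) in H0. destruct H0 as [j Ej].
    pose proof (R_pb _ _ _ _ (char_pb TX Mx (bg TX (sc_x U)))) as RP.
    set (w0 := pb_pair RP (be D ∘ k) j (eq_sym Ej)).
    set (Q'' := mkOb (sc_a U) w (sc_x U) (al U) w0).
    assert (S1 : fmap R (sc_g m) ∘ be Q'' = be D ∘ k).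
    { unfold Q''; rewrite be_mk. unfold w0; apply pb_pair1. }
    assert (S2 : fmap R (sc_g m) ∘ al Q'' = al D ∘ sc_f m).
    { unfold Q''; rewrite al_mk. exact (sqa m). }
    set (qD := mkH Q'' D (sc_f m) (sc_g m) k S2 S1).
    assert (Cone : comp (C:=SC) chi' qD = comp (C:=SC) truS (toOne Q'')).
    { apply SCHom_eq; simpl.
      - etransitivity; [exact comm'a|]. f_equal; apply bg_uniq.
      - etransitivity; [exact comm'x|]. f_equal; apply bg_uniq.
      - apply (eqi_mono TA F1 q1). rewrite !comp_assoc. rewrite e_tp.
        apply (pr_ext HQ); rewrite !comp_assoc; unfold tph; rewrite ?pr_pair1, ?pr_pair2.
        + unfold holds in H. rewrite !comp_assoc in H. rewrite H. f_equal; apply bg_uniq.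
        + transitivity (fmap R chx ∘ (be D ∘ k)); [rewrite <- Eq2, !comp_assoc; reflexivity|]. rewrite <- S1.
          rewrite comp_assoc, <- fmap_comp, CMx, fmap_comp, <- !comp_assoc. f_equal; apply RtX_uniq. }
    destruct (proj2 (H' (toOne U)) Q'' qD (toOne Q'') Cone) as [u [U1 _]].
    apply (holds_char TA Mb). exists (sc_h u). exact (f_equal (fun u => sc_h u) U1).
  - intro H. apply (holds_char TA Mb) in H. destruct H as [j <-].
    unfold holds. pose proof comm'b as CA. cbn [sc_a sc_b sc_x OmS mkOb] in CA |- *. rewrite <- !comp_assoc, (comp_assoc _ _ _ _ _ _ (sc_h m) j), CA.
    rewrite <- !comp_assoc, (cl e_tp), comp_assoc. unfold tph; rewrite pr_pair1. f_equal; apply bg_uniq.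
Qed.

Lemma chi_uniq : chi' = chi.
Proof. apply SCHom_eq; simpl; [apply uniq_a|apply uniq_x|apply uniq_b]. Qed.
End UNIQ.
End MONO.
End CLS.

Lemma SC_topos : is_topos SC.
Proof.
  split; [|split].
  - split.
    + exists one; apply one_term.
    + intros a b c f g. exists (PB f g), (PB1 f g), (PB2 f g). apply PB_is.
  - split.
    + intros a b. exists (PR a b), (PR1 a b), (PR2 a b). apply PR_is.
    + intros a b. exists (EE a b), (PR (EE a b) a), (PR1 _ _), (PR2 _ _), (EV a b). apply EXP_is.
  - exists one, OmS, truS. split; [apply one_term|]. intros u x m Hm. simpl.
    exists (chi m Hm). split.
    + intro k; apply chi_pb.
    + intros chi' H'. apply chi_uniq; exact H'.
Qed.
End Main.

Theorem theorem3p5 (A X : Category) (L : Functor A X) (R : Functor X A) :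
  geometric_morphism L R -> is_topos (StrCsp L).
Proof.
  intros [HA [HX [Hadj _]]]. destruct Hadj as [eta [eps [n1 [n2 [t1 t2]]]]].
  exact (SC_topos L R eta eps n1 n2 t1 t2 (mkTopos A HA) (mkTopos X HX)).
Qed.
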